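(* Let $\lambda=(\lambda_1,\dots,\lambda_l)$ and $\mu=(\mu_1,\dots,\mu_m)$ be decompositions of $n$ with $1<\mu_m<\lambda_l$, and let $\mu'=(\mu_1,\dots,\mu_{m-1},\mu_m-1,1)$. Then $P_{\lambda|\mu'}\le P_{\lambda|\mu}$ has index $[P_{\lambda|\mu}:P_{\lambda|\mu'}]=2^{\mu_m}-1$.
   Context: A decomposition of $N$ is a finite sequence of positive integers with sum $N$. For a decomposition $\lambda=(\lambda_1,\dots,\lambda_l)$ of $N$, $P_\lambda\le\mathrm{GL}_N(\mathbb{F}_2)$ is the standard parabolic subgroup of invertible block upper triangular matrices with diagonal blocks of sizes $\lambda_1,\dots,\lambda_l$ in this order. $P_\mu^t$ is the group of transposes of elements of $P_\mu$, and $P_{\lambda|\mu}=P_\lambda\cap P_\mu^t$. *)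

(* Defs.v *)
From mathcomp Require Import all_boot all_order all_algebra all_fingroup.
Set Implicit Arguments. Unset Strict Implicit. Unset Printing Implicit Defensive.

Definition decomposition (s : seq nat) (N : nat) : bool :=
  all (fun x => 0 < x) s && (sumn s == N).

(* Index (0-based) of the diagonal block containing row/column i (0-based),
   for the block sizes s: the number of k < size s with
   s_1 + ... + s_(k+1) <= i. *)
Definition blk (s : seq nat) (i : nat) : nat :=
  count (fun k => sumn (take k.+1 s) <= i) (iota 0 (size s)).

(* Standard parabolic subgroup P_s of GL_N(F_2): invertible block upper
   triangular matrices with diagonal blocks of sizes given by s. *)
Definition parabolic (N : nat) (s : seq nat) : {set {'GL_N['F_2]}} :=
  [set g : {'GL_N['F_2]} | [forall i : 'I_N.-1.+1, forall j : 'I_N.-1.+1,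
       (blk s j < blk s i) ==> (GLval g i j == 0%R)]].

Definition parabolic_tr (N : nat) (s : seq nat) : {set {'GL_N['F_2]}} :=
  [set g : {'GL_N['F_2]} | [exists h in parabolic N s, GLval g == trmx (GLval h)]].

Definition Pbar (N : nat) (la mu : seq nat) : {set {'GL_N['F_2]}} :=
  parabolic N la :&: parabolic_tr N mu.

(* Main.v *)
Require Import Defs.
From mathcomp Require Import all_boot all_order all_algebra all_fingroup.
From mathcomp Require Import zify.
Set Implicit Arguments. Unset Strict Implicit. Unset Printing Implicit Defensive.

Lemma sumn_take_le (s : seq nat) k : sumn (take k s) <= sumn s.
Proof. by rewrite -{2}(cat_take_drop k s) sumn_cat leq_addr. Qed.

Lemma blk_rcons s x i : blk (rcons s x) i = blk s i + (sumn s + x <= i).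
Proof.
rewrite /blk size_rcons -addn1 iotaD count_cat /= add0n addn0.
congr (_ + _).
  apply: eq_in_count => k; rewrite mem_iota /= add0n => lt_ks.
  by rewrite -cats1 takel_cat.
by rewrite take_oversize ?size_rcons // sumn_rcons.
Qed.

Lemma blk_le s i : blk s i <= size s.
Proof. by rewrite /blk -{2}(size_iota 0 (size s)) count_size. Qed.

Lemma blk_max s i : sumn s <= i -> blk s i = size s.
Proof.
move=> le_si.
rewrite /blk -[X in _ = X](size_iota 0 (size s)) -[size (iota _ _)]count_predT.
apply: eq_in_count => k _ /=; exact: leq_trans (sumn_take_le _ _) le_si.
Qed.

Lemma blk_lt s i : i < sumn s -> blk s i < size s.
Proof.
move=> lt_is; case/lastP: s lt_is => [|s x] //.
rewrite sumn_rcons blk_rcons size_rcons => lt.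
have -> : (sumn s + x <= i) = false by rewrite leqNgt lt.
rewrite addn0 ltnS; exact: blk_le.
Qed.

Local Open Scope ring_scope.
Import GRing.Theory.

Lemma F2xx (a : 'F_2) : a + a = 0.
Proof. by case: a => [[|[|[]]] ?] //; apply/val_inj. Qed.
Lemma F2nz (a : 'F_2) : a != 0 -> a = 1.
Proof. by case: a => [[|[|[]]] ?] //; rewrite ?eqxx //; move=> _; apply/val_inj. Qed.

Definition mkGL N (A : 'M['F_2]_N.-1.+1) (uA : A \in unitmx) : {'GL_N['F_2]} := Sub A uA.
Lemma mkGLE N A uA : GLval (@mkGL N A uA) = A. Proof. by []. Qed.

Lemma in_tr N s (g : {'GL_N['F_2]}) : (g \in parabolic_tr N s) =
  [forall i : 'I_N.-1.+1, forall j : 'I_N.-1.+1, (blk s i < blk s j)%N ==> (GLval g i j == 0)].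
Proof.
rewrite inE; apply/existsP/forallP => [[h /andP[]]|H].
  rewrite inE => /forallP Hh /eqP -> i; apply/forallP => j; rewrite mxE.
  exact: (forallP (Hh j) i).
have uT : (GLval g)^T \in unitmx by rewrite unitmx_tr GL_unitmx.
exists (mkGL uT); rewrite inE mkGLE trmxK eqxx andbT.
apply/forallP => i; apply/forallP => j; rewrite mxE; exact: (forallP (H j) i).
Qed.

Lemma upper_mul N (r : 'I_N -> 'I_N -> bool)
  (cot : forall i j k, r i j -> r i k || r k j) (A B : 'M['F_2]_N) :
  (forall i j, r i j -> A i j = 0) -> (forall i j, r i j -> B i j = 0) ->
  forall i j, r i j -> (A *m B) i j = 0.
Proof.
move=> HA HB i j rij; rewrite mxE big1 // => k _.
case/orP: (cot i j k rij) => [/HA -> | /HB ->]. rewrite GRing.mul0r. done. rewrite GRing.mulr0. done.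
Qed.

Lemma par_gs N s : group_set (parabolic N s).
Proof.
apply/group_setP; split.
  rewrite inE; apply/forallP=> i; apply/forallP=> j; apply/implyP => lt.
  rewrite GL_1E mxE; case: (eqVneq i j) lt => [->|nij]; first by rewrite ltnn.
  by move=> _; rewrite /= mulr0n eqxx.
move=> g h; rewrite !inE => /forallP Hg /forallP Hh; rewrite GL_MxE.
apply/forallP=> i; apply/forallP=> j; apply/implyP => lt; apply/eqP.
apply: (upper_mul (r := fun i j => (blk s j < blk s i)%N)) lt.
- move=> i' j' k /= l; case: (ltnP (blk s k) (blk s i')) => //= le.
  exact: leq_trans l le.
- by move=> i' j' l; apply/eqP; exact: (implyP (forallP (Hg i') j')).
- by move=> i' j' l; apply/eqP; exact: (implyP (forallP (Hh i') j')).
Qed.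

Lemma partr_gs N s : group_set (parabolic_tr N s).
Proof.
apply/group_setP; split.
  rewrite in_tr; apply/forallP=> i; apply/forallP=> j; apply/implyP => lt.
  rewrite GL_1E mxE; case: (eqVneq i j) lt => [->|nij]; first by rewrite ltnn.
  by move=> _; rewrite /= mulr0n eqxx.
move=> g h; rewrite !in_tr => /forallP Hg /forallP Hh; rewrite GL_MxE.
apply/forallP=> i; apply/forallP=> j; apply/implyP => lt; apply/eqP.
apply: (upper_mul (r := fun i j => (blk s i < blk s j)%N)) lt.
- move=> i' j' k /= l; case: (ltnP (blk s i') (blk s k)) => //= le.
  exact: leq_ltn_trans le l.
- by move=> i' j' l; apply/eqP; exact: (implyP (forallP (Hg i') j')).
- by move=> i' j' l; apply/eqP; exact: (implyP (forallP (Hh i') j')).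
Qed.

Canonical par_group N s := Group (par_gs N s).
Canonical partr_group N s := Group (partr_gs N s).

Lemma Pbar_gs N la mu : group_set (Pbar N la mu).
Proof. exact: (group_setI (par_group N la) (partr_group N mu)). Qed.
Canonical Pbar_group N la mu := Group (Pbar_gs N la mu).

Lemma inPbarP N la mu (g : {'GL_N['F_2]}) :
  reflect ((forall i j : 'I_N.-1.+1, (blk la j < blk la i)%N -> GLval g i j = 0) /\
           (forall i j : 'I_N.-1.+1, (blk mu i < blk mu j)%N -> GLval g i j = 0))
          (g \in Pbar N la mu).
Proof.
rewrite /Pbar in_setI in_tr inE.
apply: (iffP andP) => [[/forallP H1 /forallP H2]|[H1 H2]]; split.
- by move=> i j l; apply/eqP; exact: (implyP (forallP (H1 i) j)).
- by move=> i j l; apply/eqP; exact: (implyP (forallP (H2 i) j)).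
- by apply/forallP => i; apply/forallP => j; apply/implyP => l; apply/eqP; apply: H1.
- by apply/forallP => i; apply/forallP => j; apply/implyP => l; apply/eqP; apply: H2.
Qed.

Lemma card_supp a m N : (a + m = N.+1)%N ->
  #|[set v : 'cV['F_2]_N.+1 | [forall i : 'I_N.+1, (i < a)%N ==> (v i 0 == 0)]]|
  = (2 ^ m)%N.
Proof.
case: m => [|m] eq.
  rewrite addn0 in eq.
  have -> : [set v : 'cV['F_2]_N.+1 | [forall i : 'I_N.+1, (i < a)%N ==> (v i 0 == 0)]]
    = [set 0].
    apply/setP=> v; rewrite !inE; apply/forallP/eqP => [H|->].
      apply/matrixP => i j; rewrite (ord1 j) mxE.
      by apply/eqP; apply: (implyP (H i)); rewrite eq ltn_ord.
    by move=> i; rewrite mxE eqxx implybT.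
  by rewrite cards1.
pose f (F : {ffun 'I_m.+1 -> 'F_2}) : 'cV['F_2]_N.+1 :=
  \col_i (if (a <= i)%N then F (inord (i - a)) else 0).
have finj : injective f.
  move=> F1 F2 E; apply/ffunP => k.
  have := congr1 (fun M : 'cV_N.+1 => M (inord (a + k)) 0) E.
  have ak : (a + k < N.+1)%N by have := ltn_ord k; lia.
  rewrite /f !mxE inordK // leq_addr addKn.
  by rewrite inord_val.
have -> : [set v : 'cV['F_2]_N.+1 | [forall i : 'I_N.+1, (i < a)%N ==> (v i 0 == 0)]]
   = f @: setT.
  apply/setP => v; apply/idP/imsetP.
    rewrite inE => /forallP H; exists [ffun k : 'I_m.+1 => v (inord (a + k)) 0] => //.
    apply/matrixP => i j; rewrite (ord1 j) !mxE ffunE.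
    case: leqP => ai.
      have im : (i - a < m.+1)%N by have := ltn_ord i; lia.
      by rewrite inordK // subnKC // inord_val.
    by apply/eqP; exact: (implyP (H i)).
  case=> F _ ->; rewrite inE; apply/forallP => i; apply/implyP => lt.
  by rewrite mxE leqNgt lt.
by rewrite card_imset // cardsT card_ffun card_Fp // card_ord.
Qed.

Section Main.
Variables (n : nat) (la0 mu0 : seq nat) (lal mum : nat).
Hypotheses (sla : (sumn la0 + lal = n.+1)%N) (smu : (sumn mu0 + mum = n.+1)%N)
  (h1 : (1 < mum)%N) (h2 : (mum < lal)%N).

Local Notation la := (rcons la0 lal).
Local Notation mu := (rcons mu0 mum).
Local Notation mu' := (mu0 ++ [:: mum.-1; 1%N]).
Local Notation G := (Pbar n.+1 la mu).
Local Notation H := (Pbar n.+1 la mu').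
Local Notation GL := {'GL_n.+1['F_2]}.

Lemma bla (i : 'I_n.+1) : blk la i = blk la0 i.
Proof.
rewrite blk_rcons sla; have -> : (n.+1 <= i)%N = false by rewrite leqNgt ltn_ord.
by rewrite addn0.
Qed.
Lemma bla_le (i : 'I_n.+1) : (blk la i <= size la0)%N.
Proof. by rewrite bla blk_le. Qed.
Lemma bla_B (i : 'I_n.+1) : (sumn mu0 <= i)%N -> blk la i = size la0.
Proof. by move=> le; rewrite bla; apply: blk_max; lia. Qed.
Lemma bmu (i : 'I_n.+1) : blk mu i = blk mu0 i.
Proof.
rewrite blk_rcons smu; have -> : (n.+1 <= i)%N = false by rewrite leqNgt ltn_ord.
by rewrite addn0.
Qed.
Lemma bmu_B (i : 'I_n.+1) : (sumn mu0 <= i)%N -> blk mu i = size mu0.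
Proof. by move=> le; rewrite bmu; apply: blk_max. Qed.
Lemma bmu_nB (i : 'I_n.+1) : (i < sumn mu0)%N -> (blk mu i < size mu0)%N.
Proof. by move=> le; rewrite bmu; apply: blk_lt. Qed.
Lemma bmu_le (i : 'I_n.+1) : (blk mu i <= size mu0)%N.
Proof. by rewrite bmu blk_le. Qed.
Lemma bmu' (i : 'I_n.+1) : blk mu' i = (blk mu0 i + (i == ord_max))%N.
Proof.
have -> : mu' = rcons (rcons mu0 mum.-1) 1 by rewrite -!cats1 -catA.
rewrite !blk_rcons sumn_rcons.
have -> : (sumn mu0 + mum.-1 + 1 <= i)%N = false.
  by have := ltn_ord i; lia.
have -> : (sumn mu0 + mum.-1 = n)%N by lia.
rewrite addn0; congr (_ + nat_of_bool _); apply/idP/eqP => [h|->] //.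
apply/val_inj => /=; have := ltn_ord i; lia.
Qed.
Lemma bmax : blk mu0 (@ord_max n) = size mu0.
Proof. by apply: blk_max => /=; lia. Qed.

Lemma sub_HG : H \subset G.
Proof.
apply/subsetP => g /inPbarP [H1 H2]; apply/inPbarP; split => // i j lt.
apply: H2; rewrite !bmu'; rewrite !bmu in lt.
have := blk_le mu0 j.
case: (eqVneq i ord_max) => [Ei|_].
  have : blk mu0 i = size mu0 by apply: blk_max; rewrite Ei /=; lia.
  case: (j == ord_max) => /=; lia.
case: (j == ord_max) => /=; lia.
Qed.

Definition actf (v : 'cV['F_2]_n.+1) (g : GL) : 'cV_n.+1 := GLval g^-1 *m v.
Lemma act1 : actf^~ 1%g =1 id.
Proof. by move=> v; rewrite /actf invg1 GL_1E mul1mx. Qed.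
Lemma actM v : act_morph actf v.
Proof. by move=> g h; rewrite /actf invMg GL_MxE mulmxA. Qed.
Definition to := TotalAction act1 actM.

Definition e : 'cV['F_2]_n.+1 := delta_mx ord_max 0.

Lemma col_e (A : 'M['F_2]_n.+1) i : (A *m e) i 0 = A i ord_max.
Proof. by rewrite -colE mxE. Qed.

Lemma e_neq0 : e != 0.
Proof.
apply/negP => /eqP/matrixP/(_ ord_max 0); rewrite !mxE !eqxx /=.
by move/eqP; rewrite oner_eq0.
Qed.

Lemma unit_col (g : GL) : GLval g *m e != 0.
Proof.
apply/negP => /eqP E.
have : GLval g^-1 *m (GLval g *m e) = e by rewrite mulmxA -GL_MxE mulVg GL_1E mul1mx.
by rewrite E mulmx0 => /esym/eqP; rewrite (negbTE e_neq0).
Qed.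

Lemma stabE : ('C_G[e | to])%g = H.
Proof.
apply/setP => g; rewrite in_setI; apply/andP/idP.
  case=> gG /astab1P /= st.
  have ge : GLval g *m e = e.
    by rewrite -{1}st mulmxA -GL_MxE mulgV GL_1E mul1mx.
  have colv i : GLval g i ord_max = (i == ord_max)%:R.
    by rewrite -col_e ge mxE eqxx andbT.
  move/inPbarP: gG => [G1 G2]; apply/inPbarP; split => // i j.
  rewrite !bmu' => lt.
  case: (eqVneq j ord_max) => [Ej|nj].
    rewrite Ej colv; case: (eqVneq i ord_max) => [Ei|ni]; last by [].
    by rewrite Ei Ej ltnn in lt.
  apply: G2; rewrite !bmu; rewrite (negbTE nj) addn0 in lt.
  exact: leq_ltn_trans (leq_addr _ _) lt.
move=> gH; split; first exact: (subsetP sub_HG).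
move/inPbarP: gH => [_ H2].
have col0 i : i != ord_max -> GLval g i ord_max = 0.
  move=> ni; apply: H2; rewrite !bmu' (negbTE ni) eqxx addn0 bmax /=.
  by rewrite addn1 ltnS blk_le.
have colv i : GLval g i ord_max = (i == ord_max)%:R.
  case: (eqVneq i ord_max) => [->|ni]; last by rewrite col0.
  apply: F2nz; apply/negP => /eqP z; have := unit_col g; case/negP.
  apply/eqP/matrixP => i' j'; rewrite (ord1 j') col_e mxE.
  by case: (eqVneq i' ord_max) => [->|ni']; [rewrite z | rewrite col0].
have ge : GLval g *m e = e.
  by apply/matrixP => i j; rewrite (ord1 j) col_e colv mxE eqxx andbT.
apply/astab1P => /=; rewrite /actf -{1}ge mulmxA -GL_MxE mulVg GL_1E mul1mx //.
Qed.

Definition S := [set v : 'cV['F_2]_n.+1 |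
  [forall i : 'I_n.+1, (i < sumn mu0)%N ==> (v i 0 == 0)]].

Lemma reach (x : 'cV['F_2]_n.+1) (y : 'rV['F_2]_n.+1) :
  (forall i : 'I_n.+1, (i < sumn mu0)%N -> x i 0 = 0) ->
  (forall j : 'I_n.+1, (j < sumn mu0)%N -> y 0 j = 0) ->
  y *m x = 0 -> y *m e = 1 -> e + x \in orbit to G e.
Proof.
move=> xs ys yx ye.
pose M : 'M['F_2]_n.+1 := 1%:M + x *m y.
have MM : M *m M = 1%:M.
  rewrite /M mulmxDl !mulmxDr !mul1mx mulmx1 !mulmxA -(mulmxA x y x) yx mulmx0 mul0mx.
  rewrite addr0 -addrA; apply/matrixP => i j; rewrite !mxE F2xx.
  by rewrite addr0.
have Munit : M \in unitmx by case: (mulmx1_unit MM).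
pose gM := @mkGL n.+1 M Munit.
have Mij i j : M i j = (i == j)%:R + x i 0 * y 0 j by rewrite !mxE big_ord1.
have gG : gM \in G.
  apply/inPbarP; split => i j lt; rewrite mkGLE Mij.
  - have nij : (i == j) = false by apply/negP => /eqP E; rewrite E ltnn in lt.
    rewrite nij add0r.
    case: (ltnP j (sumn mu0)) => jB; first by rewrite ys // mulr0.
    by rewrite (bla_B jB) ltnNge bla_le in lt.
  - have nij : (i == j) = false by apply/negP => /eqP E; rewrite E ltnn in lt.
    rewrite nij add0r.
    case: (ltnP i (sumn mu0)) => iB; first by rewrite xs // mul0r.
    by rewrite (bmu_B iB) ltnNge bmu_le in lt.
have ginv : gM^-1%g = gM.
  apply/eqP; rewrite eq_invg_mul; apply/eqP/val_inj.
  by rewrite -[\val _]/(GLval _) GL_MxE mkGLE MM.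
apply/orbitP; exists gM => //=.
by rewrite /actf ginv mkGLE /M mulmxDl mul1mx -mulmxA ye mulmx1.
Qed.

Lemma orbitE : orbit to G e = S :\ 0.
Proof.
apply/setP => v; apply/idP/idP.
  case/orbitP => g gG <- /=; rewrite /actf.
  have gV : (g^-1)%g \in G by rewrite groupV.
  move/inPbarP: gV => [_ G2].
  rewrite !inE unit_col /=; apply/forallP => i; apply/implyP => lt.
  rewrite col_e; apply/eqP; apply: G2; rewrite (@bmu_B ord_max) /=; last by lia.
  exact: bmu_nB.
rewrite !inE => /andP [nz /forallP sv].
have [k vk] : exists k, v k 0 != 0.
  case: (pickP (fun k => v k 0 != 0)) => [k vk|none]; first by exists k.
  case/negP: nz; apply/eqP/matrixP => i j; rewrite (ord1 j) mxE.
  by move/negbFE/eqP: (none i).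
have kB : (sumn mu0 <= k)%N.
  by rewrite leqNgt; apply/negP => lt; move: (implyP (sv k) lt); rewrite (negbTE vk).
have vk1 := F2nz vk.
have xs : forall i : 'I_n.+1, (i < sumn mu0)%N -> (v - e) i 0 = 0.
  move=> i lt; rewrite !mxE (eqP (implyP (sv i) lt)).
  have -> : (i == ord_max) = false.
    by apply/negP => /eqP Ei; rewrite Ei /= in lt; lia.
  by rewrite subrr.
have veq : e + (v - e) = v by rewrite addrC subrK.
rewrite -veq.
have en : e ord_max 0 = 1 by rewrite mxE !eqxx.
case: (eqVneq (v ord_max 0) 1) => [vn1|vn].
  apply: (reach (y := delta_mx 0 ord_max)) xs _ _ _.
  - move=> j lt; rewrite mxE.
    have -> : (j == ord_max) = false.
      by apply/negP => /eqP Ej; rewrite Ej /= in lt; lia.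
    by rewrite andbF.
  - apply/matrixP => i j; rewrite (ord1 i) (ord1 j) -rowE !mxE vn1 !eqxx.
    by rewrite subrr.
  - apply/matrixP => i j; rewrite (ord1 i) (ord1 j) -rowE !mxE !eqxx.
    by [].
have vn0 : v ord_max 0 = 0.
  by case: (eqVneq (v ord_max 0) 0) => // /F2nz vn1; rewrite vn1 eqxx in vn.
have nk : (k == ord_max) = false.
  by apply/negP => /eqP Ek; rewrite Ek vn0 eqxx in vk.
apply: (reach (y := delta_mx 0 ord_max + delta_mx 0 k)) xs _ _ _.
- move=> j lt; rewrite !mxE.
  have -> : (j == ord_max) = false.
    by apply/negP => /eqP Ej; rewrite Ej /= in lt; lia.
  have -> : (j == k) = false.
    by apply/negP => /eqP Ej; rewrite Ej in lt; lia.
  by rewrite !andbF addr0.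
- apply/matrixP => i j; rewrite (ord1 i) (ord1 j) mulmxDl -!rowE !mxE vn0 vk1.
  rewrite nk !eqxx /= subr0 sub0r.
  by rewrite addNr.
- apply/matrixP => i j; rewrite (ord1 i) (ord1 j) mulmxDl -!rowE !mxE !eqxx.
  by rewrite nk /= addr0.
Qed.

Lemma main_res : H \subset G /\ indexg G H = (2 ^ mum - 1)%N.
Proof.
split; first exact: sub_HG.
rewrite -stabE -card_orbit orbitE.
have := cardsD1 0 S.
have -> : (0 : 'cV['F_2]_n.+1) \in S.
  by rewrite inE; apply/forallP => i; rewrite mxE eqxx implybT.
rewrite /S (card_supp smu) /=.
by move=> ->; rewrite addKn.
Qed.

End Main.

Local Close Scope ring_scope.

Theorem corollary1 (n : nat) (la0 mu0 : seq nat) (lal mum : nat) :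
  decomposition (rcons la0 lal) n ->
  decomposition (rcons mu0 mum) n ->
  1 < mum < lal ->
  Pbar n (rcons la0 lal) (mu0 ++ [:: mum.-1; 1]) \subset Pbar n (rcons la0 lal) (rcons mu0 mum) /\
  indexg (Pbar n (rcons la0 lal) (rcons mu0 mum)) (Pbar n (rcons la0 lal) (mu0 ++ [:: mum.-1; 1]))
    = 2 ^ mum - 1.
Proof.
move=> /andP[_ /eqP sla] /andP[_ /eqP smu] /andP[h1 h2].
rewrite sumn_rcons in sla; rewrite sumn_rcons in smu.
case: n sla smu => [|n] sla smu; first by lia.
exact: (main_res sla smu h1 h2).
Qed.
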